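(* Let $F$ be the fractal percolation in $[0,1]^2$ with parameters $M\in\mathbb{N}_{\geq2}$ and $p\in[0,1]$, $D=\log(M^2p)/\log M$, $r=1/M$, let $J_1,J_4$ be two level-1 squares sharing a common side, and for $k\in\{0,1\}$ let $$E_1:=2M(M-1)\sum_{n=1}^\infty r^{n(D-k)}\mathbb{E}V_k(C_n^1\cap C_n^4).$$ If $p>1/M^2$, then for $k=0$, $$E_1=\frac{2M(M-1)}{M-p}\left(\frac{2(1-p)}{M-1}+\frac{2(M-1)p}{M^2-p}-\frac{p(1-p^2)}{M-p^2}\right)-\frac{2M(M-1)^2p^3}{(M-p^2)(M^2-p^3)}+\frac{2M(M-1)}{M^2p-1}-\frac{8M}{M+1}+\frac{4M(M-1)p}{M^2-p}.$$ If $p>1/M$, then for $k=1$, $E_1=2(M-1)\left(\frac{1}{Mp-1}-\frac{2}{M-1}+\frac{p}{M-p}\right)$.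
   Context: Fractal percolation in $[0,1]^2$: $F_0=[0,1]^2$; given $F_{n-1}$, a union of closed grid squares of side $M^{-(n-1)}$, each is divided into $M^2$ closed subsquares of side $M^{-n}$, each kept independently (of everything else) with probability $p$; $F_n$ is the union of kept subsquares. The level-1 squares are the $M^2$ closed subsquares of $[0,1]^2$ of side $1/M$. For a level-1 square $J_j$, $C_n^j$ is the union of those level-$n$ grid squares contained in $J_j$ that do not belong to $F_n$. $V_0$ is the Euler characteristic and $V_1$ the first intrinsic volume (length, for subsets of a segment). *)

(* Defs.v *)
From HB Require Import structures.
From mathcomp Require Import all_boot all_order all_algebra.
From mathcomp Require Import all_classical all_reals all_analysis.
Set Implicit Arguments. Unset Strict Implicit. Unset Printing Implicit Defensive.
Import Order.TTheory GRing.Theory Num.Theory.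
Local Open Scope ring_scope.

(* A level-n grid square is indexed by (a,b) with a,b < M^n: it is         *)
(*   [a/M^n,(a+1)/M^n] x [b/M^n,(b+1)/M^n].                                *)
Definition sq (M n : nat) := ('I_(M ^ n) * 'I_(M ^ n))%type.

(* Coin-flip nodes used to build F_1,...,F_n: a node (m,(a,b)) with        *)
(* m : 'I_n is the level-(m+1) square with coordinates (a,b)               *)
(* (only meaningful when a,b < M^(m+1); the remaining coins are unused,    *)
(* independent, and do not affect the law of (F_1,...,F_n)).               *)
Definition node (M n : nat) := ('I_n * sq M n)%type.
Definition config (M n : nat) := {ffun node M n -> bool}.

(* coordinate of the level-(m+1) ancestor of a level-n coordinate a *)
Definition anc (M n : nat) (m : 'I_n) (a : 'I_(M ^ n)) : 'I_(M ^ n) :=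
  Ordinal (leq_ltn_trans (leq_div a (M ^ (n - m.+1))) (ltn_ord a)).

(* the level-n square s belongs to F_n: it and all its ancestors of levels *)
(* 1..n were kept *)
Definition kept (M n : nat) (w : config M n) (s : sq M n) : bool :=
  [forall m : 'I_n, w (m, (anc m s.1, anc m s.2))].

Definition in_level1 (M n : nat) (j : 'I_M * 'I_M) (s : sq M n) : bool :=
  ((s.1 %/ M ^ n.-1)%N == j.1) && ((s.2 %/ M ^ n.-1)%N == j.2).

(* the squares whose union is C_n^j *)
Definition removed_in (M n : nat) (w : config M n) (j : 'I_M * 'I_M)
  (s : sq M n) : bool := in_level1 j s && ~~ kept w s.

Definition weight (R : realType) (M n : nat) (p : R) (w : config M n) : R :=
  \prod_(t : node M n) (if w t then p else 1 - p).

(* Cells of the level-n grid cell complex of [0,1]^2, in doubled          *)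
(* coordinates (i,j), 0 <= i,j <= 2 M^n: (even,even) = vertex             *)
(* (i/2,j/2)/M^n, (odd,even) / (even,odd) = closed edges, (odd,odd) =      *)
(* closed square. A closed cell c lies in the closed square s iff          *)
(* 2 s.1 <= c.1 <= 2 s.1 + 2 and likewise for the second coordinate.       *)
Definition cell (M n : nat) := ('I_(2 * M ^ n).+1 * 'I_(2 * M ^ n).+1)%type.

Definition cell_in_sq (M n : nat) (c : cell M n) (s : sq M n) : bool :=
  [&& (2 * s.1 <= c.1)%N, (c.1 <= 2 * s.1 + 2)%N,
      (2 * s.2 <= c.2)%N & (c.2 <= 2 * s.2 + 2)%N].

Definition cell_dim (M n : nat) (c : cell M n) : nat := (odd c.1 + odd c.2)%N.

Definition cell_in_C (M n : nat) (w : config M n) (j : 'I_M * 'I_M)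
  (c : cell M n) : bool := [exists s, removed_in w j s && cell_in_sq c s].

(* A subcomplex X of the level-n grid (given by its set of closed cells)   *)
(* and its intrinsic volumes, computed by additivity over the relatively   *)
(* open cells:  V_0 = sum (-1)^dim,                                        *)
(* V_1 = h * #edges - 2 h * #squares, h = M^-n the mesh.                   *)
Definition V0 (R : realType) (M n : nat) (X : pred (cell M n)) : R :=
  \sum_(c : cell M n | X c) (-1) ^+ cell_dim c.

Definition V1 (R : realType) (M n : nat) (X : pred (cell M n)) : R :=
  \sum_(c : cell M n | X c)
     (if cell_dim c == 1%N then (M%:R ^+ n)^-1
      else if cell_dim c == 2%N then - 2 * (M%:R ^+ n)^-1 else 0).

Definition Vk (R : realType) (k M n : nat) (X : pred (cell M n)) : R :=
  if k == 0%N then V0 R X else V1 R X.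

Definition Cint (M n : nat) (w : config M n) (j1 j4 : 'I_M * 'I_M) :
  pred (cell M n) := fun c => cell_in_C w j1 c && cell_in_C w j4 c.

Definition EVk (R : realType) (k M n : nat) (p : R) (j1 j4 : 'I_M * 'I_M) : R :=
  \sum_(w : config M n) weight p w * Vk R k (Cint w j1 j4).

Definition adjacent_sides (M : nat) (j1 j4 : 'I_M * 'I_M) : bool :=
  ((j1.1 == j4.1) && (((j1.2).+1 == j4.2)%N || ((j4.2).+1 == j1.2)%N)) ||
  ((j1.2 == j4.2) && (((j1.1).+1 == j4.1)%N || ((j4.1).+1 == j1.1)%N)).

Definition dimD (R : realType) (M : nat) (p : R) : R :=
  ln (M%:R ^+ 2 * p) / ln M%:R.

Definition E1_partial (R : realType) (k M : nat) (p : R) (j1 j4 : 'I_M * 'I_M)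
  (N : nat) : R :=
  2 * M%:R * (M%:R - 1) *
  \sum_(1 <= n < N) ((M%:R^-1) `^ (n%:R * (dimD M p - k%:R)) * @EVk R k M n p j1 j4).

(* Main.v *)
Require Import Defs.
From HB Require Import structures.
From mathcomp Require Import all_boot all_order all_algebra.
From mathcomp Require Import all_classical all_reals all_analysis.
From mathcomp Require Import ring lra zify.
Import Order.TTheory GRing.Theory Num.Theory numFieldNormedType.Exports.
Set Implicit Arguments. Unset Strict Implicit. Unset Printing Implicit Defensive.
Local Open Scope ring_scope.
Local Open Scope classical_set_scope.

Section A.
Variable R : realType.
Definition Gs (x : R) (N : nat) : R := \sum_(1 <= n < N) x ^+ n.
Lemma geom_lim (x : R) : `|x| < 1 -> Gs x @ \oo --> x / (1 - x).
Proof.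
move=> hx.
have -> : x / (1 - x) = 1 / (1 - x) - 1.
  have hx1 : 1 - x != 0.
    apply/negP => /eqP h. have : x = 1 by lra. move=> e; rewrite e normr1 in hx; lra.
  field; done.
have H : \forall N \near \oo, series (geometric 1 x) N - 1 = Gs x N.
  near=> N. rewrite /Gs /series /= (@big_ltn _ _ _ 0 N); last by near: N; exists 1%N.
  by rewrite expr0 mul1r addrAC subrr add0r; apply: eq_bigr => i _; rewrite mul1r.
apply: cvg_trans (near_eq_cvg H) _.
apply: cvgB; last exact: cvg_cst.
exact: cvg_geometric_series.
Unshelve. all: end_near.
Qed.

Lemma powR_factor (M : nat) (p : R) (k n : nat) : (2 <= M)%N -> 0 < p ->
  (M%:R^-1) `^ (n%:R * (dimD M p - k%:R)) =
  ((M%:R ^+ 2 * p) ^+ n)^-1 * M%:R ^+ (k * n).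
Proof.
move=> hM hp.
have hM0 : (0 : R) < M%:R by rewrite ltr0n; lia.
have hM1 : (1 : R) < M%:R by rewrite ltr1n; lia.
have hX : (0 : R) < M%:R ^+ 2 * p by rewrite mulr_gt0 // exprn_gt0.
have hlnM : ln (M%:R : R) != 0 by rewrite gt_eqF // ln_gt0.
rewrite /powR invr_eq0 gt_eqF //= lnV ?posrE //.
have e : n%:R * (dimD M p - k%:R) * - ln (M%:R : R) =
   ln (M%:R ^+ (k * n) : R) - ln ((M%:R ^+ 2 * p) ^+ n).
  rewrite lnXn; last done.
  rewrite lnXn; last done.
  rewrite /dimD -(mulr_natr (ln _) (k * n)) -(mulr_natr (ln _) n) natrM.
  field. done.
rewrite e expRB !lnK ?posrE ?exprn_gt0 //.
by rewrite mulrC.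
Qed.

Variables (M : nat) (p : R).
Let m : R := M%:R.
Definition kk2 := 4 + 2 * (p - 1) / (m - p).
Definition kk4 := -1 - (p ^+ 2 - 1) / (m - p ^+ 2).
Definition ll1 := 2 * (1 - p) / (m - p).
Definition ll2 := (p ^+ 2 - 1) / (m - p ^+ 2).
Definition clos0 (n : nat) : R :=
  1 - 4 * p ^+ n + kk2 * (p ^+ n) ^+ 2 + kk4 * (p ^+ n) ^+ 4
  + ll1 * m ^+ n * p ^+ n + ll2 * m ^+ n * (p ^+ n) ^+ 2.
Definition clos1 (n : nat) : R := (1 - p ^+ n) ^+ 2 / m.

Lemma term0 (n : nat) : (2 <= M)%N -> 0 < p ->
  ((m ^+ 2 * p) ^+ n)^-1 * m ^+ (0 * n) * clos0 n =
  (m ^+ 2 * p)^-1 ^+ n - 4 * (m ^+ 2)^-1 ^+ n + kk2 * (p / m ^+ 2) ^+ n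
  + kk4 * (p ^+ 3 / m ^+ 2) ^+ n + ll1 * m^-1 ^+ n + ll2 * (p / m) ^+ n.
Proof.
move=> hM hp.
have hm : m != 0 by rewrite /m pnatr_eq0; lia.
have hp0 : p != 0 by rewrite gt_eqF.
rewrite /clos0 mul0n expr0 mulr1 !expr_div_n !exprVn !exprMn.
have hA : m ^+ n != 0 by rewrite expf_neq0.
have hP : p ^+ n != 0 by rewrite expf_neq0.
field. by rewrite hA hP.
Qed.

Lemma term1 (n : nat) : (2 <= M)%N -> 0 < p ->
  ((m ^+ 2 * p) ^+ n)^-1 * m ^+ (1 * n) * clos1 n =
  m^-1 * ((m * p)^-1 ^+ n - 2 * m^-1 ^+ n + (p / m) ^+ n).
Proof.
move=> hM hp.
have hm : m != 0 by rewrite /m pnatr_eq0; lia.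
have hp0 : p != 0 by rewrite gt_eqF.
rewrite /clos1 mul1n !expr_div_n !exprVn !exprMn.
have hA : m ^+ n != 0 by rewrite expf_neq0.
have hP : p ^+ n != 0 by rewrite expf_neq0.
field. by rewrite hA hP.
Qed.
Lemma lt1_div (a b : R) : 0 <= a -> a < b -> `|a / b| < 1.
Proof.
move=> ha hab; have hb : 0 < b by apply: le_lt_trans hab.
rewrite ger0_norm; last by rewrite divr_ge0 // ltW.

by rewrite ltr_pdivrMr // mul1r.
Qed.

Lemma lim0 (j1 j4 : 'I_M * 'I_M) : (2 <= M)%N -> 0 <= p <= 1 ->
  (forall n, (0 < n)%N -> @EVk R 0 M n p j1 j4 = clos0 n) ->
  (M%:R ^+ 2)^-1 < p ->
    @E1_partial R 0%N M p j1 j4 @ \oo -->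
      (2 * M%:R * (M%:R - 1) / (M%:R - p) *
         (2 * (1 - p) / (M%:R - 1) + 2 * (M%:R - 1) * p / (M%:R ^+ 2 - p)
          - p * (1 - p ^+ 2) / (M%:R - p ^+ 2))
       - 2 * M%:R * (M%:R - 1) ^+ 2 * p ^+ 3
           / ((M%:R - p ^+ 2) * (M%:R ^+ 2 - p ^+ 3))
       + 2 * M%:R * (M%:R - 1) / (M%:R ^+ 2 * p - 1)
       - 8 * M%:R / (M%:R + 1)
       + 4 * M%:R * (M%:R - 1) * p / (M%:R ^+ 2 - p) : R).
Proof.
move=> hM /andP[hp0 hp1] H0 hpl.
have hm1 : 1 < m by rewrite /m ltr1n; lia.
have hm0 : 0 < m by lra.
have hm2 : 0 < m ^+ 2 by rewrite exprn_gt0.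
have hp : 0 < p by apply: lt_trans _ hpl; rewrite invr_gt0.
have hmp : 1 < m ^+ 2 * p by rewrite -ltr_pdivrMl // mulr1.
have hm4 : m < m ^+ 2 by rewrite expr2 -{1}(mulr1 m) ltr_pM2l.
have hp2 : p ^+ 2 <= 1 by rewrite expr_le1.
have hp3 : p ^+ 3 <= 1 by rewrite expr_le1.
have hp2' : 0 <= p ^+ 2 by rewrite exprn_ge0.
have hp3' : 0 <= p ^+ 3 by rewrite exprn_ge0.
have E : @E1_partial R 0%N M p j1 j4 = fun N => 2 * m * (m - 1) *
  (Gs (m ^+ 2 * p)^-1 N - 4 * Gs (m ^+ 2)^-1 N + kk2 * Gs (p / m ^+ 2) N
  + kk4 * Gs (p ^+ 3 / m ^+ 2) N + ll1 * Gs m^-1 N + ll2 * Gs (p / m) N).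
  apply: funext => N; rewrite /E1_partial; congr (_ * _).
  rewrite (@eq_big_nat _ _ _ 1 N _ (fun n => (m ^+ 2 * p)^-1 ^+ n - 4 * (m ^+ 2)^-1 ^+ n + kk2 * (p / m ^+ 2) ^+ n
  + kk4 * (p ^+ 3 / m ^+ 2) ^+ n + ll1 * m^-1 ^+ n + ll2 * (p / m) ^+ n)); last first.
    move=> n /andP[hn _]; rewrite powR_factor // H0 // term0 //.
  by rewrite /Gs !big_split /= sumrN !mulr_sumr.
rewrite E.
have gl : forall a b, 0 <= a -> a < b -> Gs (a / b) @ \oo --> (a / b) / (1 - a / b).
  by move=> a b ha hab; apply: geom_lim; apply: lt1_div.
have g0 := gl 1 (m ^+ 2 * p) ler01 hmp. rewrite div1r in g0.
have g1 := gl 1 (m ^+ 2) ler01 (lt_trans hm1 hm4). rewrite div1r in g1.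
have g2 := gl p (m ^+ 2) hp0 (le_lt_trans hp1 (lt_trans hm1 hm4)).
have g4 := gl (p ^+ 3) (m ^+ 2) hp3' (le_lt_trans hp3 (lt_trans hm1 hm4)).
have g5 := gl 1 m ler01 hm1. rewrite div1r in g5.
have g6 := gl p m hp0 (le_lt_trans hp1 hm1).
set L := (X in _ --> X).
have -> : L = 2 * m * (m - 1) *
  ((m ^+ 2 * p)^-1 / (1 - (m ^+ 2 * p)^-1) - 4 * ((m ^+ 2)^-1 / (1 - (m ^+ 2)^-1))
  + kk2 * (p / m ^+ 2 / (1 - p / m ^+ 2))
  + kk4 * (p ^+ 3 / m ^+ 2 / (1 - p ^+ 3 / m ^+ 2)) + ll1 * (m^-1 / (1 - m^-1))
  + ll2 * (p / m / (1 - p / m))).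
  rewrite /L /kk2 /kk4 /ll1 /ll2 /m.
  field.
  rewrite -/m; have hpm : p < m by lra.
  have hp2m : p ^+ 2 < m by lra.
  have hp3m : p ^+ 3 < m ^+ 2 by lra.
  rewrite !(gt_eqF, lt0r_neq0, subr_gt0, addr_gt0, mulr_gt0, exprn_gt0) //; lra.
apply: cvgMl_tmp.
apply: cvgD; last exact: cvgMl_tmp.
apply: cvgD; last exact: cvgMl_tmp.
apply: cvgD; last exact: cvgMl_tmp.
apply: cvgD; last exact: cvgMl_tmp.
apply: cvgB; last exact: cvgMl_tmp.
exact: g0.
Qed.

Lemma lim1 (j1 j4 : 'I_M * 'I_M) : (2 <= M)%N -> 0 <= p <= 1 ->
  (forall n, (0 < n)%N -> @EVk R 1 M n p j1 j4 = clos1 n) ->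
  (M%:R^-1 < p ->
    @E1_partial R 1%N M p j1 j4 @ \oo -->
      (2 * (M%:R - 1) *
         ((M%:R * p - 1)^-1 - 2 / (M%:R - 1) + p / (M%:R - p)) : R)).
Proof.
move=> hM /andP[hp0 hp1] H1 hpl.
have hm1 : 1 < m by rewrite /m ltr1n; lia.
have hm0 : 0 < m by lra.
have hp : 0 < p by apply: lt_trans _ hpl; rewrite invr_gt0.
have hmp : 1 < m * p by rewrite -ltr_pdivrMl // mulr1.
have E : @E1_partial R 1%N M p j1 j4 = fun N => 2 * m * (m - 1) * m^-1 *
  (Gs (m * p)^-1 N - 2 * Gs m^-1 N + Gs (p / m) N).
  apply: funext => N; rewrite /E1_partial -[RHS]mulrA; congr (_ * _).
  rewrite (@eq_big_nat _ _ _ 1 N _ (fun n => m^-1 * ((m * p)^-1 ^+ n - 2 * m^-1 ^+ n + (p / m) ^+ n))); last first.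
    move=> n /andP[hn _]; rewrite powR_factor // H1 // term1 //.
  by rewrite -mulr_sumr /Gs !big_split /= sumrN !mulr_sumr.
rewrite E.
have gl : forall a b, 0 <= a -> a < b -> Gs (a / b) @ \oo --> (a / b) / (1 - a / b).
  by move=> a b ha hab; apply: geom_lim; apply: lt1_div.
have g0 := gl 1 (m * p) ler01 hmp. rewrite div1r in g0.
have g5 := gl 1 m ler01 hm1. rewrite div1r in g5.
have g6 := gl p m hp0 (le_lt_trans hp1 hm1).
set L := (X in _ --> X).
have -> : L = 2 * m * (m - 1) * m^-1 *
  ((m * p)^-1 / (1 - (m * p)^-1) - 2 * (m^-1 / (1 - m^-1))
  + (p / m / (1 - p / m))).
  rewrite /L /m.
  field.
  rewrite -/m; have hpm : p < m by lra.
  rewrite !(gt_eqF, lt0r_neq0, subr_gt0, addr_gt0, mulr_gt0, exprn_gt0) //; lra.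
apply: cvgMl_tmp.
apply: cvgD; last exact: g6.
apply: cvgB; last exact: cvgMl_tmp.
exact: g0.
Qed.
End A.
Local Close Scope classical_set_scope.

Lemma tele (R : realType) (q : R) (d i N : nat) :
  q ^+ (\sum_(e < N) ((d ^ e) %| i)%N)%N =
  1 + \sum_(e < N) ((d ^ e) %| i)%N%:R * (q ^+ e.+1 - q ^+ e).
Proof.
elim: N => [|N IH]; first by rewrite !big_ord0 expr0 addr0.
rewrite !big_ord_recr /=.
case: (boolP ((d ^ N) %| i)%N) => h.
  have hall : forall e : 'I_N, ((d ^ e) %| i)%N.
    by move=> e; apply: dvdn_trans h; apply: dvdn_exp2l; exact: ltnW (ltn_ord e).
  have -> : (\sum_(e < N) ((d ^ e) %| i)%N)%N = N.
    by under eq_bigr do rewrite hall; rewrite sum_nat_const card_ord muln1.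
  under eq_bigr do rewrite hall mul1r.
  rewrite -(big_mkord xpredT (fun e => q ^+ e.+1 - q ^+ e)) telescope_sumr //.
  by rewrite addn1 mul1r expr0; ring.
by rewrite addn0 IH mul0r addr0.
Qed.

Lemma count_mult (c d : nat) : (0 < d)%N ->
  (\sum_(0 <= i < c * d) (d %| i))%N = c.
Proof.
move=> hd; elim: c => [|c IH]; first by rewrite mul0n big_geq.
rewrite mulSnr (@big_cat_nat _ _ _ (c * d)) //=; last by rewrite leq_addr.
rewrite IH -{1}(add0n (c * d)%N) big_addn addKn.
under eq_bigr do rewrite dvdn_addl ?dvdn_mull //.
rewrite big_ltn // dvdn0 big1_seq ?addn0 ?addn1 //.
move=> i /andP[_]; rewrite mem_index_iota => /andP[h1 h2].
by case: (boolP (d %| i)%N) => // /(dvdn_leq h1); lia.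
Qed.

Section B.
Variables (R : realType) (M n : nat) (p : R).

Definition fk (k : nat) (c : cell M n) : R :=
  if k == 0%N then (-1) ^+ cell_dim c else
  (if cell_dim c == 1%N then (M%:R ^+ n)^-1
      else if cell_dim c == 2%N then - 2 * (M%:R ^+ n)^-1 else 0).

Lemma Vk_sum k (X : pred (cell M n)) : Vk R k X = \sum_c (X c)%:R * fk k c.
Proof.
rewrite /Vk /fk; case: eqP => _; rewrite ?/V0 ?/V1 big_mkcond; apply: eq_bigr => c _;
  by case: (X c); rewrite ?mul1r ?mul0r.
Qed.

Definition Ec (j1 j4 : 'I_M * 'I_M) (c : cell M n) : R :=
  \sum_(w : config M n) weight p w * (Cint w j1 j4 c)%:R.

Lemma EVk_cells k j1 j4 : @EVk R k M n p j1 j4 = \sum_c fk k c * Ec j1 j4 c.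
Proof.
rewrite /EVk /Ec; under eq_bigr => w _ do rewrite Vk_sum mulr_sumr.
rewrite exchange_big; apply: eq_bigr => c _; rewrite mulr_sumr.
by apply: eq_bigr => w _; rewrite mulrA mulrC.
Qed.

Lemma forall_prod (w : config M n) (T : {set node M n}) :
  ([forall t in T, w t])%:R = \prod_t (if t \in T then (w t)%:R else 1) :> R.
Proof.
case: (boolP [forall t in T, w t]) => [/forall_inP h| /forall_inPn [t tT wt]].
  by rewrite big1 // => t _; case: ifP => // /h ->.
by rewrite (bigD1 t) //= tT (negbTE wt) mul0r.
Qed.

Lemma prob_all (T : {set node M n}) :
  \sum_(w : config M n) weight p w * ([forall t in T, w t])%:R = p ^+ #|T|.
Proof.
under eq_bigr do rewrite forall_prod /weight -big_split /=.
rewrite -(bigA_distr_bigA (fun t (b : bool) =>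
   (if b then p else 1 - p) * (if t \in T then b%:R else 1))) /=.
rewrite -prodr_const [RHS]big_mkcond; apply: eq_bigr => t _.
rewrite big_bool /=; case: (t \in T); rewrite ?mulr1 ?mulr0 ?addr0 //.
by rewrite addrC subrK.
Qed.

Definition nodes_of (S : {set sq M n}) : {set node M n} :=
  [set t : node M n | [exists s in S, t.2 == (anc t.1 s.1, anc t.1 s.2)]].

Definition Aset (j : 'I_M * 'I_M) (c : cell M n) : {set sq M n} :=
  [set s : sq M n | in_level1 j s && cell_in_sq c s].

Lemma cellC w j c : cell_in_C w j c = ~~ [forall t in nodes_of (Aset j c), w t].
Proof.
rewrite /cell_in_C; apply/existsP/idP.
  move=> [s /andP[/andP[hj hk] hc]]; apply/forall_inP => h.
  move/negP: hk; apply; apply/forallP => m.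
  apply: h; rewrite inE; apply/existsP; exists s; by rewrite inE hj hc /=.
move=> /forall_inPn [t tN wt]; move: tN; rewrite inE => /existsP [s /andP[sA /eqP e]].
move: sA; rewrite inE => /andP[hj hc].
exists s; rewrite /removed_in hj hc /= andbT /kept; apply/forallP => h.
by move/negP: wt; apply; have := h t.1; rewrite -e -surjective_pairing.
Qed.

Lemma Ec_eq j1 j4 c : Ec j1 j4 c =
  1 - p ^+ #|nodes_of (Aset j1 c)| - p ^+ #|nodes_of (Aset j4 c)|
  + p ^+ #|nodes_of (Aset j1 c) :|: nodes_of (Aset j4 c)|.
Proof.
set A := nodes_of _; set B := nodes_of _.
have h1 : 1 = \sum_(w : config M n) weight p w * ([forall t in (finset.set0 : {set node M n}), w t])%:R.
  by rewrite prob_all cards0.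
rewrite [in RHS]h1 -!prob_all.
rewrite /Ec -!sumrB -big_split /=; apply: eq_bigr => w _.
rewrite /Cint !cellC -/A -/B.
have -> : [forall t in A :|: B, w t] = [forall t in A, w t] && [forall t in B, w t].
  apply/forall_inP/andP.
    by move=> h; split; apply/forall_inP => t tA; apply: h; rewrite inE tA ?orbT.
  by move=> [/forall_inP g1 /forall_inP g2] t; rewrite inE => /orP[/g1|/g2].
have -> : [forall t in (finset.set0 : {set node M n}), w t] by apply/forall_inP => t; rewrite inE.
by case: [forall t in A, w t]; case: [forall t in B, w t] => /=; ring.
Qed.

Lemma anc_div (m : 'I_n) (x : 'I_(M ^ n)) :
  ((anc m x : nat) %/ M ^ m = x %/ M ^ n.-1)%N.
Proof.
rewrite /anc /= -divnMA -expnD; congr (_ %/ M ^ _)%N.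
have := ltn_ord m; lia.
Qed.

Lemma disj j1 j4 c : j1 != j4 ->
  [disjoint nodes_of (Aset j1 c) & nodes_of (Aset j4 c)].
Proof.
move=> hne; rewrite -setI_eq0; apply/eqP/setP => t; rewrite !inE.
apply/negP => /andP[/existsP[s /andP[sA /eqP e1]] /existsP[s' /andP[sA' /eqP e2]]].
move: sA sA'; rewrite !inE /in_level1 => /andP[/andP[/eqP a1 /eqP a2] _] /andP[/andP[/eqP b1 /eqP b2] _].
move: e2; rewrite e1 => /eqP; rewrite xpair_eqE => /andP[/eqP f1 /eqP f2].
move/eqP: hne; apply.
have g1 := anc_div t.1 s.1; have g2 := anc_div t.1 s.2.
have h1 := anc_div t.1 s'.1; have h2 := anc_div t.1 s'.2.
rewrite f1 in g1; rewrite f2 in g2.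
case: j1 a1 a2 => [x1 y1] /= a1 a2; case: j4 b1 b2 => [x4 y4] /= b1 b2.
congr pair; apply: val_inj; rewrite /= -?a1 -?a2 -?b1 -?b2.
  by rewrite -g1 h1.
by rewrite -g2 h2.
Qed.

Lemma Ec_prod j1 j4 c : j1 != j4 -> Ec j1 j4 c =
  (1 - p ^+ #|nodes_of (Aset j1 c)|) * (1 - p ^+ #|nodes_of (Aset j4 c)|).
Proof.
move=> hne; rewrite Ec_eq cardsU (disjoint_setI0 (@disj j1 j4 c hne)) cards0 subn0 exprD.
move: (p ^+ #|nodes_of (Aset j1 c)|) (p ^+ #|nodes_of (Aset j4 c)|) => x y; ring.
Qed.

Lemma card_nodes (S : {set sq M n}) : #|nodes_of S| =
  (\sum_(m < n) #|[set (anc m s.1, anc m s.2) | s in S]|)%N.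
Proof.
rewrite -sum1_card; under [RHS]eq_bigr do rewrite -sum1_card.
rewrite pair_big_dep /=; apply: eq_bigl => t.
rewrite inE; apply/existsP/imsetP.
  by move=> [s /andP[sS /eqP e]]; exists s.
by move=> [s sS e]; exists s; rewrite sS e eqxx.
Qed.

Lemma nodes_of0 : nodes_of finset.set0 = finset.set0.
Proof. by apply/setP => t; rewrite !inE; apply/existsP => [[s]]; rewrite inE. Qed.

Lemma card_nodes1 (s0 : sq M n) : #|nodes_of [set s0]| = n.
Proof.
rewrite card_nodes; under eq_bigr do rewrite imset_set1 cards1.
by rewrite sum_nat_const card_ord muln1.
Qed.

Lemma card_nodes2 (s0 s1 : sq M n) : s0.2 = s1.2 -> #|nodes_of [set s0; s1]| =
  (n + \sum_(m < n) (anc m s0.1 != anc m s1.1))%N.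
Proof.
move=> e; rewrite card_nodes; under eq_bigr do rewrite imsetU1 imset_set1 cards2 xpair_eqE e eqxx andbT -add1n.
by rewrite big_split /= sum_nat_const card_ord muln1.
Qed.
End B.

Lemma sum_split2 (R : realType) (g : nat -> R) N :
  \sum_(t < (2 * N)%N.+1) g t = g 0%N + \sum_(i < N) (g (2 * i + 1)%N + g (2 * i + 2)%N).
Proof.
rewrite -(big_mkord xpredT g) -(big_mkord xpredT (fun i => g (2 * i + 1)%N + g (2 * i + 2)%N)).
elim: N => [|N IH]; first by rewrite !big_nat1 big_geq // addr0.
rewrite [in RHS]big_nat_recr //= addrA -IH.
have -> : (2 * N.+1).+1 = ((2 * N).+1).+2 by lia.
rewrite big_nat_recr //= big_nat_recr //= -addrA; congr (_ + (g _ + g _)); lia.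
Qed.

Section C.
Variables (R : realType) (M n : nat) (p : R) (j1 j4 : 'I_M * 'I_M).
Hypotheses (hM : (2 <= M)%N) (hn : (0 < n)%N) (e1 : j4.1 = j1.1)
  (e2 : (j4.2 : nat) = (j1.2).+1).
Let K := (M ^ n.-1)%N.
Let a := (j1.1 : nat).
Let b := (j1.2 : nat).

Lemma MnK : (M ^ n = M * K)%N.
Proof. by rewrite /K -expnS prednK. Qed.
Lemma K_gt0 : (0 < K)%N.
Proof. by rewrite expn_gt0; apply/orP; left; lia. Qed.
Lemma haK : (a * K + K <= M ^ n)%N.
Proof.
rewrite MnK (_ : a * K + K = a.+1 * K)%N; last by rewrite mulSn addnC.
by apply: leq_mul => //; exact: ltn_ord.
Qed.
Lemma hbK : (b * K + K + K <= M ^ n)%N.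
Proof.
rewrite MnK (_ : b * K + K + K = b.+2 * K)%N; last by rewrite !mulSn; lia.
apply: leq_mul => //; have := ltn_ord j4.2; rewrite e2 /b; lia.
Qed.

Lemma divK x y : ((x %/ K)%N == y) = (y * K <= x < y * K + K)%N.
Proof.
have hK := K_gt0.
by rewrite eqn_leq -ltnS ltn_divLR // leq_divRL // mulSn; lia.
Qed.

Definition hc (t : nat) : cell M n := (inord (2 * (a * K) + t)%N, inord (2 * (b * K + K))%N).

Definition Bset (Y t : nat) : {set sq M n} :=
  [set s : sq M n | [&& (s.2 : nat) == Y, (a * K <= s.1)%N, (s.1 < a * K + K)%N,
     (2 * s.1 <= 2 * (a * K) + t)%N & (2 * (a * K) + t <= 2 * s.1 + 2)%N]].

Lemma hc1 t : (t <= 2 * K)%N -> ((hc t).1 : nat) = (2 * (a * K) + t)%N.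
Proof. by move=> ht; rewrite /hc /= inordK //; have := haK; lia. Qed.
Lemma hc2 t : ((hc t).2 : nat) = (2 * (b * K + K))%N.
Proof. by rewrite /hc /= inordK //; have := hbK; lia. Qed.

Lemma Aset1 t : (t <= 2 * K)%N -> Aset j1 (hc t) = Bset (b * K + K - 1) t.
Proof.
move=> ht; apply/setP => s; rewrite !inE /in_level1 /cell_in_sq hc1 // hc2 -/K !divK.
have hK := K_gt0; rewrite -/a -/b; lia.
Qed.

Lemma Aset4 t : (t <= 2 * K)%N -> Aset j4 (hc t) = Bset (b * K + K) t.
Proof.
move=> ht; apply/setP => s; rewrite !inE /in_level1 /cell_in_sq hc1 // hc2 -/K !divK.
rewrite e1 e2 -/a -/b mulSn.
have hK := K_gt0; lia.
Qed.

Lemma mk_sq x y : (x < M ^ n)%N -> (y < M ^ n)%N ->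
  exists s : sq M n, (s.1 : nat) = x /\ (s.2 : nat) = y.
Proof. by move=> hx hy; exists (Ordinal hx, Ordinal hy). Qed.

Lemma Bset_single Y t x : (Y < M ^ n)%N -> (x < M ^ n)%N ->
  (forall u : sq M n, (u \in Bset Y t) = ((u.1 : nat) == x) && ((u.2 : nat) == Y)) ->
  #|nodes_of (Bset Y t)| = n.
Proof.
move=> hY hx hu; have [s0 [h1 h2]] := mk_sq hx hY.
have -> : Bset Y t = [set s0].
  by apply/setP => u; rewrite hu inE -pair_eqE /= -!val_eqE /= h1 h2.
exact: card_nodes1.
Qed.

Lemma Bcard_odd Y i : (Y < M ^ n)%N -> (i < K)%N -> #|nodes_of (Bset Y (2 * i + 1)%N)| = n.
Proof.
move=> hY hi; have := haK; have hK := K_gt0 => h.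
apply: (@Bset_single _ _ (a * K + i)) => //; first lia.
by move=> u; rewrite inE; lia.
Qed.

Lemma Bcard_0 Y : (Y < M ^ n)%N -> #|nodes_of (Bset Y 0)| = n.
Proof.
move=> hY; have := haK; have hK := K_gt0 => h.
apply: (@Bset_single _ _ (a * K)) => //; first lia.
by move=> u; rewrite inE; lia.
Qed.

Lemma Bcard_2K Y : (Y < M ^ n)%N -> #|nodes_of (Bset Y (2 * K)%N)| = n.
Proof.
move=> hY; have := haK; have hK := K_gt0 => h.
apply: (@Bset_single _ _ (a * K + K - 1)) => //; first lia.
by move=> u; rewrite inE; lia.
Qed.

Definition cnt (i : nat) : nat := \sum_(m < n) (M ^ (n - m.+1) %| i).

Lemma Bcard_even Y i : (Y < M ^ n)%N -> (0 < i < K)%N ->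
  #|nodes_of (Bset Y (2 * i)%N)| = (n + cnt i)%N.
Proof.
move=> hY hi; have := haK; have hK := K_gt0 => h.
have hx0 : (a * K + i - 1 < M ^ n)%N by lia.
have hx1 : (a * K + i < M ^ n)%N by lia.
have [s0 [h01 h02]] := mk_sq hx0 hY.
have [s1 [h11 h12]] := mk_sq hx1 hY.
have -> : Bset Y (2 * i)%N = [set s0; s1].
  apply/setP => u; rewrite !inE -!pair_eqE /= -!val_eqE /= h01 h02 h11 h12; lia.
rewrite card_nodes2; last by apply/eqP; rewrite -val_eqE /= h02 h12.
congr (_ + _)%N; apply: eq_bigr => m _.
rewrite -val_eqE /= h01 h11.
have hd : (0 < M ^ (n - m.+1))%N by rewrite expn_gt0; apply/orP; left; lia.
have e : (a * K + i = (a * K + i - 1).+1)%N by lia.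
rewrite [X in (_ %/ _ != X %/ _)%N]e divnS // -e dvdn_addr; last first.
  apply: dvdn_mull; apply: dvdn_exp2l; have := ltn_ord m; lia.
by case: (_ %| i)%N => /=; rewrite ?add0n ?eqxx // add1n; lia.
Qed.
Lemma side_img c : Aset j1 c != finset.set0 -> Aset j4 c != finset.set0 ->
  exists t, (t <= 2 * K)%N /\ c = hc t.
Proof.
move=> /set0Pn [s hs] /set0Pn [s' hs'].
move: hs hs'; rewrite !inE /in_level1 /cell_in_sq -/K !divK e1 e2 [(b.+1 * K)%N]mulSn -/a -/b => hs hs'.
have hK := K_gt0.
have ht : (c.1 - 2 * (a * K) <= 2 * K)%N by lia.
exists (c.1 - 2 * (a * K))%N; split => //.
have := haK; have := hbK => h1 h2.
rewrite [c]surjective_pairing /hc; congr pair; apply: val_inj; rewrite /= inordK; lia.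
Qed.

Lemma hc_inj : {in predT &, injective (fun t : 'I_(2 * K)%N.+1 => hc t)}.
Proof.
move=> t t' _ _ /(congr1 (fun c : cell M n => (c.1 : nat))).
rewrite (hc1 (ltn_ord t)) (hc1 (ltn_ord t')) => h; apply: val_inj; rewrite /=; lia.
Qed.

Lemma cells_to_t (F : cell M n -> R) :
  (forall c, Aset j1 c = finset.set0 \/ Aset j4 c = finset.set0 -> F c = 0) ->
  \sum_c F c = \sum_(t < (2 * K)%N.+1) F (hc t).
Proof.
move=> hF.
rewrite (bigID (fun c => c \in [set hc (nat_of_ord t) | t in 'I_(2 * K)%N.+1])) /=.
rewrite [X in _ + X]big1 ?addr0; last first.
  move=> c hc'; apply: hF.
  case: (boolP (Aset j1 c == finset.set0)) => [/eqP|h1]; first by left.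
  case: (boolP (Aset j4 c == finset.set0)) => [/eqP|h4]; first by right.
  have [t [ht ec]] := side_img h1 h4.
  move/negP: hc'; case; apply/imsetP; exists (Ordinal (ht : (t < (2 * K)%N.+1)%N)) => //.
rewrite (big_imset _ hc_inj) /=.
by apply: eq_bigl.
Qed.
Lemma hne : j1 != j4.
Proof. apply/negP => /eqP e; move: e2; rewrite -e; lia. Qed.

Lemma EVk_t k : @EVk R k M n p j1 j4 = \sum_(t < (2 * K)%N.+1) fk R k (hc t) *
  ((1 - p ^+ #|nodes_of (Aset j1 (hc t))|) * (1 - p ^+ #|nodes_of (Aset j4 (hc t))|)).
Proof.
rewrite EVk_cells (@cells_to_t (fun c => fk R k c * Ec p j1 j4 c)).
  by apply: eq_bigr => t _; rewrite Ec_prod // hne.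
move=> c hc'; rewrite Ec_prod ?hne //.
by case: hc' => ->; rewrite nodes_of0 cards0 expr0 subrr ?mul0r ?mulr0.
Qed.

Lemma dim_hc t : (t <= 2 * K)%N -> cell_dim (hc t) = odd t.
Proof.
move=> ht; rewrite /cell_dim hc1 // hc2 !oddD !oddM /=.
by case: (odd a); case: (odd K); case: (odd b); case: (odd t).
Qed.

Let Y1 := (b * K + K - 1)%N.
Let Y4 := (b * K + K)%N.
Lemma hY1 : (Y1 < M ^ n)%N. Proof. have := hbK; rewrite /Y1; lia. Qed.
Lemma hY4 : (Y4 < M ^ n)%N. Proof. have := hbK; have := K_gt0; rewrite /Y4; lia. Qed.

Lemma NAB t v : (t <= 2 * K)%N ->
  (forall Y, (Y < M ^ n)%N -> #|nodes_of (Bset Y t)| = v) ->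
  #|nodes_of (Aset j1 (hc t))| = v /\ #|nodes_of (Aset j4 (hc t))| = v.
Proof.
move=> ht hB; rewrite Aset1 // Aset4 //; split; apply: hB; [exact: hY1 | exact: hY4].
Qed.

Lemma gt_val k t v : (t <= 2 * K)%N ->
  (forall Y, (Y < M ^ n)%N -> #|nodes_of (Bset Y t)| = v) ->
  fk R k (hc t) * ((1 - p ^+ #|nodes_of (Aset j1 (hc t))|) * (1 - p ^+ #|nodes_of (Aset j4 (hc t))|))
  = (if k == 0%N then (-1) ^+ odd t else if odd t then (M%:R ^+ n)^-1 else 0) * (1 - p ^+ v) ^+ 2.
Proof.
move=> ht hB; have [-> ->] := NAB ht hB.
rewrite /fk dim_hc // expr2; case: (k == 0%N) => //.
by case: (odd t).
Qed.

Definition vv (i : nat) : nat := if i.+1 == K then n else (n + cnt i.+1)%N.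

Lemma Bcard_t2 i Y : (i < K)%N -> (Y < M ^ n)%N ->
  #|nodes_of (Bset Y (2 * i + 2)%N)| = vv i.
Proof.
move=> hi hY; rewrite /vv; case: eqP => h.
  have -> : (2 * i + 2 = 2 * K)%N by lia.
  by rewrite Bcard_2K.
have -> : (2 * i + 2 = 2 * i.+1)%N by lia.
rewrite Bcard_even //= ltn_neqAle hi andbT; exact/eqP.
Qed.

Lemma EVk_gsum k : @EVk R k M n p j1 j4 =
  (if k == 0%N then 1 else 0) * (1 - p ^+ n) ^+ 2 +
  \sum_(i < K) ((if k == 0%N then -1 else (M%:R ^+ n)^-1) * (1 - p ^+ n) ^+ 2 +
                (if k == 0%N then 1 else 0) * (1 - p ^+ vv i) ^+ 2).
Proof.
have hK := K_gt0.
rewrite EVk_t (sum_split2 (fun t => fk R k (hc t) * ((1 - p ^+ #|nodes_of (Aset j1 (hc t))|) * (1 - p ^+ #|nodes_of (Aset j4 (hc t))|)))) (@gt_val k 0 n) //; last by move=> Y hY; exact: Bcard_0.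
congr (_ * _ + _).
apply: eq_bigr => i _.
rewrite (@gt_val k (2 * i + 1)%N n); last by move=> Y hY; exact: Bcard_odd.
  rewrite (@gt_val k (2 * i + 2)%N (vv i)); last by move=> Y hY; exact: Bcard_t2.
    have -> : odd (2 * i + 1)%N by rewrite oddD oddM.
    have -> : odd (2 * i + 2)%N = false by rewrite oddD oddM.
    by case: (k == 0%N); rewrite ?expr1 ?expr0.
  have := ltn_ord i; lia.
have := ltn_ord i; lia.
Qed.

Definition VS : R := \sum_(1 <= i < K) (1 - p ^+ (n + cnt i)) ^+ 2.

Lemma EV1_val : @EVk R 1 M n p j1 j4 = K%:R * (M%:R ^+ n)^-1 * (1 - p ^+ n) ^+ 2.
Proof.
rewrite EVk_gsum /= mul0r add0r.
under eq_bigr do rewrite mul0r addr0.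
by rewrite sumr_const card_ord mulr_natl mulrnAl.
Qed.

Lemma EV0_val : @EVk R 0 M n p j1 j4 =
  2 * (1 - p ^+ n) ^+ 2 - K%:R * (1 - p ^+ n) ^+ 2 + VS.
Proof.
have hK := K_gt0.
rewrite EVk_gsum /= mul1r big_split /= sumr_const card_ord.
under eq_bigr do rewrite mul1r.
rewrite /VS /vv; case E : K hK => [//|K'] _.
rewrite big_ord_recr /= eqxx.
have -> : \sum_(i < K') (1 - p ^+ (if i.+1 == K'.+1 then n else (n + cnt i.+1)%N)) ^+ 2 =
          \sum_(1 <= i < K'.+1) (1 - p ^+ (n + cnt i)) ^+ 2.
  rewrite big_add1 /= big_mkord; apply: eq_bigr => i _.
  have -> // : (i.+1 == K'.+1) = false.
  by apply/negP => /eqP [] h; have := ltn_ord i; lia.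
rewrite -mulr_natl mulN1r; ring.
Qed.

End C.

Section D.
Variables (R : realType) (M n : nat) (p : R) (j1 j4 : 'I_M * 'I_M).
Hypotheses (hM : (2 <= M)%N) (hn : (0 < n)%N) (e1 : j4.1 = j1.1)
  (e2 : (j4.2 : nat) = (j1.2).+1).
Let K := (M ^ n.-1)%N.
Let a := (j1.1 : nat).
Let b := (j1.2 : nat).
Let hK0 : (0 < K)%N := @K_gt0 M n j1 j4 hM hn e2.
Lemma cnt_rev i : cnt M n i = (\sum_(e < n) ((M ^ e) %| i))%N.
Proof.
rewrite /cnt (reindex_inj rev_ord_inj) /=; apply: eq_bigr => e _.
by have -> : (n - (n - e.+1).+1 = e)%N by have := ltn_ord e; lia.
Qed.

Lemma count_K e : (e < n)%N ->
  (\sum_(1 <= i < K) ((M ^ e) %| i))%N = (M ^ (n.-1 - e) - 1)%N.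
Proof.
move=> he.
have hK : K = (M ^ (n.-1 - e) * M ^ e)%N by rewrite -expnD subnK //; lia.
have hM0 : (0 < M)%N by lia.
have hMe : (0 < M ^ e)%N by rewrite expn_gt0 hM0.
have h := @count_mult (M ^ (n.-1 - e)) (M ^ e) hMe.
rewrite -hK big_ltn ?hK0 // dvdn0 in h; lia.
Qed.

Let m : R := M%:R.

Lemma S_val (q : R) : q != m -> \sum_(1 <= i < K) q ^+ cnt M n i =
  (K%:R - 1) + (q - 1) * ((m ^+ n - q ^+ n) / (m - q)) - (q ^+ n - 1).
Proof.
move=> hq.
under eq_bigr do rewrite cnt_rev tele.
rewrite big_split /= sumr_const_nat exchange_big /=.
under eq_bigr => e _ do rewrite -mulr_suml -natr_sum (count_K (ltn_ord e)).
have hM0 : (0 < M)%N by lia.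
under eq_bigr => e _ do rewrite natrB ?expn_gt0 ?hM0 // natrX.
have -> : \sum_(i < n) ((m ^+ (n.-1 - i) - 1) * (q ^+ i.+1 - q ^+ i)) =
  (q - 1) * \sum_(i < n) (m ^+ (n.-1 - i) * q ^+ i) - \sum_(i < n) (q ^+ i.+1 - q ^+ i).
  rewrite mulr_sumr -sumrB; apply: eq_bigr => i _; rewrite exprS; ring.
have hmq : m - q != 0 by rewrite subr_eq0 eq_sym.
rewrite -(big_mkord xpredT (fun e => q ^+ e.+1 - q ^+ e)) telescope_sumr // expr0.
rewrite subrXX [(m - q) * _]mulrC mulfK // natrB ?hK0 //.
by rewrite addrA.
Qed.

Definition Sf (q : R) : R :=
  (K%:R - 1) + (q - 1) * ((m ^+ n - q ^+ n) / (m - q)) - (q ^+ n - 1).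

Lemma VS_val : p != m -> p ^+ 2 != m ->
  VS M n p = (K%:R - 1) - 2 * p ^+ n * Sf p + (p ^+ n) ^+ 2 * Sf (p ^+ 2).
Proof.
move=> h1 h2.
have E : forall c, (1 - p ^+ (n + c)) ^+ 2 = 1 - 2 * p ^+ n * p ^+ c + (p ^+ n) ^+ 2 * (p ^+ 2) ^+ c.
  by move=> c; rewrite exprD [(p ^+ 2) ^+ c]exprAC; ring.
rewrite /VS; under eq_bigr do rewrite E.
rewrite big_split /= sumrB sumr_const_nat -!mulr_sumr !S_val // natrB ?hK0 //.
Qed.

Lemma EV0_closed : p != m -> p ^+ 2 != m -> @EVk R 0 M n p j1 j4 = clos0 M p n.
Proof.
move=> h1 h2.
have hm : m != 0 by rewrite /m pnatr_eq0; lia.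
have hmp1 : m - p != 0 by rewrite subr_eq0 eq_sym.
have hmp2 : m - p ^+ 2 != 0 by rewrite subr_eq0 eq_sym.
rewrite (EV0_val p hM hn e1 e2) VS_val // /Sf /clos0 /kk2 /kk4 /ll1 /ll2 -/m -/K.
have -> : m ^+ n = m * K%:R by rewrite /m -natrX -natrM /K -expnS prednK.
rewrite ![(p ^+ 2) ^+ n]exprAC.
move: (K%:R : R) (p ^+ n) => k P.
field.
by rewrite ?hm ?hmp1 ?hmp2.
Qed.

Lemma EV1_closed : @EVk R 1 M n p j1 j4 = clos1 M p n.
Proof.
have hm : m != 0 by rewrite /m pnatr_eq0; lia.
have hk : (K%:R : R) != 0 by rewrite pnatr_eq0 -lt0n hK0.
rewrite (EV1_val p hM hn e1 e2) /clos1 -/m.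
have -> : (M%:R : R) ^+ n = m * K%:R by rewrite /m -natrX -natrM /K -expnS prednK.
move: (K%:R : R) hk (p ^+ n) => k hk P.
by field; rewrite hm hk.
Qed.
End D.

Definition swp (T : Type) (x : T * T) : T * T := (x.2, x.1).
Lemma swpK (T : Type) : involutive (@swp T).
Proof. by case. Qed.
Lemma swp_inj (T : Type) : injective (@swp T).
Proof. exact: inv_inj (@swpK T). Qed.

Section E.
Variables (R : realType) (M n : nat) (p : R).

Definition nsw (t : node M n) : node M n := (t.1, swp t.2).
Lemma nswK : involutive nsw.
Proof. by case=> m [x y]. Qed.
Definition trw (w : config M n) : config M n := [ffun t => w (nsw t)].
Lemma trwK : involutive trw.
Proof. by move=> w; apply/ffunP => t; rewrite !ffunE nswK. Qed.

Lemma weight_trw w : weight p (trw w) = weight p w.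
Proof.
rewrite /weight (reindex_inj (inv_inj nswK)) /=.
by apply: eq_bigr => t _; rewrite ffunE nswK.
Qed.

Lemma removed_trw w j s : removed_in (trw w) (swp j) s = removed_in w j (swp s).
Proof.
rewrite /removed_in.
have -> : in_level1 (swp j) s = in_level1 j (swp s) by rewrite /in_level1 /= andbC.
have -> // : kept (trw w) s = kept w (swp s).
by apply: eq_forallb => m; rewrite ffunE.
Qed.

Lemma cell_sq_swp (c : cell M n) s : cell_in_sq (swp c) s = cell_in_sq c (swp s).
Proof.
rewrite /cell_in_sq /=.
by apply/idP/idP => /and4P[h1 h2 h3 h4]; apply/and4P.
Qed.

Lemma cellC_swp w j c : cell_in_C (trw w) (swp j) (swp c) = cell_in_C w j c.
Proof.
rewrite /cell_in_C; apply/existsP/existsP => [[s hs]|[s hs]].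
  by exists (swp s); rewrite -removed_trw -cell_sq_swp.
by exists (swp s); rewrite removed_trw cell_sq_swp !swpK.
Qed.

Lemma EVk_swap k j1 j4 :
  @EVk R k M n p j1 j4 = @EVk R k M n p (swp j1) (swp j4).
Proof.
rewrite /EVk [RHS](reindex_inj (inv_inj trwK)) /=.
apply: eq_bigr => w _; rewrite weight_trw; congr (_ * _).
rewrite !Vk_sum [RHS](reindex_inj (@swp_inj _)) /=.
apply: eq_bigr => c _; rewrite /Cint !cellC_swp; congr (_ * _).
by rewrite /fk /cell_dim /= addnC.
Qed.

Lemma EVk_sym k j1 j4 : @EVk R k M n p j1 j4 = @EVk R k M n p j4 j1.
Proof.
rewrite /EVk; apply: eq_bigr => w _; rewrite !Vk_sum; congr (_ * _).
by apply: eq_bigr => c _; rewrite /Cint andbC.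
Qed.
End E.

Local Open Scope classical_set_scope.

Lemma canon (R : realType) (M : nat) (p : R) (j1 j4 : 'I_M * 'I_M) :
  (2 <= M)%N -> 0 <= p <= 1 -> j4.1 = j1.1 -> (j4.2 : nat) = (j1.2).+1 ->
  (forall n, (0 < n)%N -> @EVk R 0 M n p j1 j4 = clos0 M p n) /\
  (forall n, (0 < n)%N -> @EVk R 1 M n p j1 j4 = clos1 M p n).
Proof.
move=> hM /andP[hp0 hp1] e1 e2.
have hm : (1 : R) < M%:R by rewrite ltr1n; lia.
have h1 : p != M%:R by rewrite lt_eqF //; lra.
have h2 : p ^+ 2 != M%:R.
  rewrite lt_eqF //; apply: le_lt_trans hm; rewrite expr_le1 //.
by split => n hn; [apply: EV0_closed | apply: EV1_closed].
Qed.

Theorem corollary5p12 (R : realType) (M : nat) (p : R) (j1 j4 : 'I_M * 'I_M) :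
  (2 <= M)%N -> 0 <= p <= 1 -> adjacent_sides j1 j4 ->
  ((M%:R ^+ 2)^-1 < p ->
    @E1_partial R 0%N M p j1 j4 @ \oo -->
      (2 * M%:R * (M%:R - 1) / (M%:R - p) *
         (2 * (1 - p) / (M%:R - 1) + 2 * (M%:R - 1) * p / (M%:R ^+ 2 - p)
          - p * (1 - p ^+ 2) / (M%:R - p ^+ 2))
       - 2 * M%:R * (M%:R - 1) ^+ 2 * p ^+ 3
           / ((M%:R - p ^+ 2) * (M%:R ^+ 2 - p ^+ 3))
       + 2 * M%:R * (M%:R - 1) / (M%:R ^+ 2 * p - 1)
       - 8 * M%:R / (M%:R + 1)
       + 4 * M%:R * (M%:R - 1) * p / (M%:R ^+ 2 - p) : R)) /\
  (M%:R^-1 < p ->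
    @E1_partial R 1%N M p j1 j4 @ \oo -->
      (2 * (M%:R - 1) *
         ((M%:R * p - 1)^-1 - 2 / (M%:R - 1) + p / (M%:R - p)) : R)).
Proof.
move=> hM hp hadj.
have [H0 H1] : (forall n, (0 < n)%N -> @EVk R 0 M n p j1 j4 = clos0 M p n) /\
  (forall n, (0 < n)%N -> @EVk R 1 M n p j1 j4 = clos1 M p n).
  move: hadj; rewrite /adjacent_sides.
  move=> /orP[/andP[/eqP h1 /orP[/eqP h2|/eqP h2]]|/andP[/eqP h1 /orP[/eqP h2|/eqP h2]]].
  - exact: canon hM hp (esym h1) (esym h2).
  - have [G0 G1] := canon hM hp h1 (esym h2).
    by split => n hn; rewrite EVk_sym; [apply: G0 | apply: G1].
  - have [G0 G1] := @canon R M p (swp j1) (swp j4) hM hp (esym h1) (esym h2).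
    by split => n hn; rewrite EVk_swap; [apply: G0 | apply: G1].
  - have [G0 G1] := @canon R M p (swp j4) (swp j1) hM hp h1 (esym h2).
    by split => n hn; rewrite EVk_sym EVk_swap; [apply: G0 | apply: G1].
split => hpl; [exact: lim0 hM hp H0 hpl | exact: lim1 hM hp H1 hpl].
Qed.
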